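(* $\mathsf{AP}(R_2,R_1)=\mathsf{AP}(R_3,R_1)=\mathsf{\Omega(1)}$.
   Context: Tuples in $\{0,1\}^4$ are written as strings $abcd$. The relations $R_1,\dots,R_5\subseteq\{0,1\}^4$ are $R_1=\{0000,1000,0100,1100,1010,0110,1001,0101,0011,1011,0111,1111\}$, $R_2=\{0000,1000,0100,1100,1010,0101,0011,1111\}$, $R_3=\{0000,1100,1010,0101,0011,1011,0111,1111\}$, $R_4=\{0000,1100,1010,0101,0011,1111\}$, $R_5=\{0000,1100,1010,0110,1001,0101,0011,1111\}$. For $R,S\subseteq\{0,1\}^4$, a Boolean function $f\colon\{0,1\}^n\to\{0,1\}$ is analogy-preserving relative to $(R,S)$ if for all $\mathbf{a},\mathbf{b},\mathbf{c},\mathbf{d}\in\{0,1\}^n$ with $(a_i,b_i,c_i,d_i)\in R$ for every $i$ and such that $(f(\mathbf{a}),f(\mathbf{b}),f(\mathbf{c}),x)\in S$ for some $x\in\{0,1\}$, we have $(f(\mathbf{a}),f(\mathbf{b}),f(\mathbf{c}),f(\mathbf{d}))\in S$; $\mathsf{AP}(R,S)$ is the set of all such functions of all arities. $\mathsf{\Omega(1)}$ is the set of all Boolean functions (of all arities) that are constant, a projection, or the negation of a projection. *)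

(* Defs.v *)
From mathcomp Require Import all_boot.
Set Implicit Arguments. Unset Strict Implicit. Unset Printing Implicit Defensive.

(* A tuple abcd in {0,1}^4 is encoded as a 4-tuple of booleans (false = 0, true = 1);
   a relation R ⊆ {0,1}^4 is a boolean predicate on such tuples. *)
Definition rel4 := bool -> bool -> bool -> bool -> bool.

Definition tup (s : seq nat) : bool * bool * bool * bool :=
  (nth 0 s 0 == 1, nth 0 s 1 == 1, nth 0 s 2 == 1, nth 0 s 3 == 1).

Definition rel_of (l : seq (seq nat)) : rel4 :=
  fun a b c d => (a, b, c, d) \in map tup l.

Definition R1 : rel4 := rel_of
  [:: [::0;0;0;0]; [::1;0;0;0]; [::0;1;0;0]; [::1;1;0;0]; [::1;0;1;0]; [::0;1;1;0];
      [::1;0;0;1]; [::0;1;0;1]; [::0;0;1;1]; [::1;0;1;1]; [::0;1;1;1]; [::1;1;1;1]].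
Definition R2 : rel4 := rel_of
  [:: [::0;0;0;0]; [::1;0;0;0]; [::0;1;0;0]; [::1;1;0;0]; [::1;0;1;0]; [::0;1;0;1];
      [::0;0;1;1]; [::1;1;1;1]].
Definition R3 : rel4 := rel_of
  [:: [::0;0;0;0]; [::1;1;0;0]; [::1;0;1;0]; [::0;1;0;1]; [::0;0;1;1]; [::1;0;1;1];
      [::0;1;1;1]; [::1;1;1;1]].
Definition R4 : rel4 := rel_of
  [:: [::0;0;0;0]; [::1;1;0;0]; [::1;0;1;0]; [::0;1;0;1]; [::0;0;1;1]; [::1;1;1;1]].
Definition R5 : rel4 := rel_of
  [:: [::0;0;0;0]; [::1;1;0;0]; [::1;0;1;0]; [::0;1;1;0]; [::1;0;0;1]; [::0;1;0;1];
      [::0;0;1;1]; [::1;1;1;1]].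

Definition AP (R S : rel4) (n : nat) (f : ('I_n -> bool) -> bool) : Prop :=
  forall a b c d : 'I_n -> bool,
    (forall i, R (a i) (b i) (c i) (d i)) ->
    (exists x : bool, S (f a) (f b) (f c) x) ->
    S (f a) (f b) (f c) (f d).

Definition Omega1 (n : nat) (f : ('I_n -> bool) -> bool) : Prop :=
  (exists c : bool, forall x, f x = c) \/
  (exists i : 'I_n, forall x, f x = x i) \/
  (exists i : 'I_n, forall x, f x = ~~ x i).

(* Main.v *)
Require Import Defs.
From mathcomp Require Import all_boot.
From Stdlib Require Import FunctionalExtensionality.

Lemma R1E p q r s : R1 p q r s = (p != q) || (r == s).
Proof. by case: p; case: q; case: r; case: s. Qed.

Lemma R2P a b c d : R2 a b c d -> a = b -> c = d.
Proof. by case: a; case: b; case: c; case: d. Qed.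

Lemma R3P a b c d : R3 a b c d -> a = b -> c = d.
Proof. by case: a; case: b; case: c; case: d. Qed.

Lemma APuse R n (f : ('I_n -> bool) -> bool) (H : AP R R1 f) a b c d :
  (forall i, R (a i) (b i) (c i) (d i)) -> f a = f b -> f c = f d.
Proof.
move=> Hr Hab.
have Hex : exists x, R1 (f a) (f b) (f c) x by exists (f c); rewrite R1E eqxx orbT.
by have := H a b c d Hr Hex; rewrite R1E Hab eqxx /= => /eqP.
Qed.

Lemma flip n (f : ('I_n -> bool) -> bool) (H : AP R2 R1 f) (j : 'I_n) :
  f (fun k => k == j) = f (fun _ => false) ->
  forall x y, (forall k, k != j -> x k = y k) -> f x = f y.
Proof.
move=> Hj x y Hxy.
case Ex: (x j); case Ey: (y j).
- congr f; apply: functional_extensionality => k.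
  by case: (eqVneq k j) => [->|/Hxy //]; rewrite Ex Ey.
- apply: (@APuse _ _ f H (fun k => k == j) (fun _ => false)) => // k.
  case: (eqVneq k j) => [->|nk]; first by rewrite Ex Ey.
  by rewrite -(Hxy k nk); case: (x k).
- apply: esym.
  apply: (@APuse _ _ f H (fun k => k == j) (fun _ => false)) => // k.
  case: (eqVneq k j) => [->|nk]; first by rewrite Ex Ey.
  by rewrite -(Hxy k nk); case: (x k).
- congr f; apply: functional_extensionality => k.
  by case: (eqVneq k j) => [->|/Hxy //]; rewrite Ex Ey.
Qed.

Definition clr {n} (s : seq 'I_n) (x : 'I_n -> bool) := fun k => x k && (k \notin s).

Lemma clear_ok n (f : ('I_n -> bool) -> bool) (H : AP R2 R1 f) (s : seq 'I_n) :
  (forall j, j \in s -> f (fun k => k == j) = f (fun _ => false)) ->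
  forall x, f x = f (clr s x).
Proof.
elim: s => [|j s IH] Hs x.
  by congr f; apply: functional_extensionality => k; rewrite /clr in_nil andbT.
rewrite IH; last by move=> j' Hj'; apply: Hs; rewrite in_cons Hj' orbT.
apply: (@flip _ f H j); first by apply: Hs; rewrite in_cons eqxx.
by move=> k nk; rewrite /clr in_cons (negbTE nk).
Qed.

Lemma R2_Omega n (f : ('I_n -> bool) -> bool) : AP R2 R1 f -> Omega1 f.
Proof.
move=> H.
set z := (fun _ : 'I_n => false).
case: (boolP [forall j, f (fun k => k == j) == f z]).
  move/forallP => Hall; left; exists (f z) => x.
  rewrite (@clear_ok _ f H (enum 'I_n)); last by move=> j _; apply/eqP.
  by congr f; apply: functional_extensionality => k; rewrite /clr mem_enum andbF.
move/forallPn => [i Hi].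
have hj : forall j, j != i -> f (fun k => k == j) = f z.
  move=> j ji; apply/eqP; apply: (contraNT _ Hi) => Hj; apply/eqP.
  apply: (@APuse _ _ f H (fun k => k == i) (fun k => k == j)).
    move=> k; case: (eqVneq k i) => [->|ki]; first by rewrite eq_sym (negbTE ji).
    by case: (eqVneq k j).
  by move: Hi Hj; case: (f (fun k => k == i)); case: (f (fun k => k == j)); case: (f z).
have key : forall x, f x = if x i then f (fun k => k == i) else f z.
  move=> x; rewrite (@clear_ok _ f H ([seq k <- enum 'I_n | k != i])); last first.
    by move=> j; rewrite mem_filter => /andP [ji _]; apply: hj.
  case Exi: (x i); congr f; apply: functional_extensionality => k;
    rewrite /clr mem_filter mem_enum andbT negbK;
    case: (eqVneq k i) => [->|]; rewrite ?andbT ?andbF ?Exi //.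
  all: idtac.
right; move: Hi key.
case: (f (fun k => k == i)); case: (f z) => //= _ key.
- by left; exists i => x; rewrite key; case: (x i).
- by right; exists i => x; rewrite key; case: (x i).
Qed.

Lemma R3_R2 n (f : ('I_n -> bool) -> bool) :
  AP R3 R1 f -> AP R2 R1 (fun x => f (fun k => ~~ x k)).
Proof.
move=> H a b c d Hr Hex; apply: H => // k.
by move: (Hr k); case: (a k); case: (b k); case: (c k); case: (d k).
Qed.

Lemma R3_Omega n (f : ('I_n -> bool) -> bool) : AP R3 R1 f -> Omega1 f.
Proof.
move=> /R3_R2 /R2_Omega.
have E : forall x, f x = f (fun k => ~~ (~~ x k)).
  by move=> x; congr f; apply: functional_extensionality => k; rewrite negbK.
case=> [[c Hc]|[[i Hi]|[i Hi]]].
- by left; exists c => x; rewrite E Hc.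
- by right; right; exists i => x; rewrite E Hi.
- by right; left; exists i => x; rewrite E Hi negbK.
Qed.

Lemma Omega_AP (R : rel4) n (f : ('I_n -> bool) -> bool) :
  (forall a b c d, R a b c d -> a = b -> c = d) -> Omega1 f -> AP R R1 f.
Proof.
move=> HR [[c0 Hc]|[[i Hi]|[i Hi]]] a b c d Hr _; rewrite R1E.
- by rewrite !Hc eqxx orbT.
- rewrite !Hi; move: (HR _ _ _ _ (Hr i)).
  by case: (a i); case: (b i); case: (c i); case: (d i) => //= /(_ erefl).
- rewrite !Hi; move: (HR _ _ _ _ (Hr i)).
  by case: (a i); case: (b i); case: (c i); case: (d i) => //= /(_ erefl).
Qed.

Theorem mainTheorem13 :
  forall (n : nat) (f : ('I_n -> bool) -> bool),
    (AP R2 R1 f <-> Omega1 f) /\ (AP R3 R1 f <-> Omega1 f).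
Proof.
move=> n f; split; split.
- exact: R2_Omega.
- exact: Omega_AP R2P.
- exact: R3_Omega.
- exact: Omega_AP R3P.
Qed.
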